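(* Let $P$ be a discrete Dubins path, let $ab$ be a long edge of $P$ (traversed from $a$ to $b$), and let $P'$ be the part of $P$ from $b$ to its last vertex. For $\varepsilon\in[0,1]$ let $P(\varepsilon)$ be the path obtained from $P$ by rigidly translating $P'$ by the vector $\varepsilon(a-b)$ (towards $a$ along $ab$ by distance $\varepsilon|ab|$), so that the edge $ab$ is replaced by the segment from $a$ to $b+\varepsilon(a-b)$. Then there exists $\varepsilon>0$ such that $P(\varepsilon)$ is a discrete curvature-constrained path.
   Context: Fix an angle $\theta$ with $0\le\theta\le\pi/2$ such that $2\pi/\theta$ is an integer, and a length $\ell>0$. For a polygonal path, the turn at an internal vertex is the angle in $[0,\pi]$ between the direction of the incoming edge and the direction of the outgoing edge. An edge is short if its length is $<\ell$, normal if $=\ell$, long if $>\ell$. An edge $e$ with an adjacent edge at each end is an inflection edge if its two adjacent edges lie on opposite sides of the supporting line of $e$, and non-inflection otherwise. A discrete curvature-constrained path is a polygonal path such that: (i) the turn at every internal vertex is at most $\theta$; (ii) no two adjacent edges are both short; (iii) for every short non-inflection edge $ab$ with adjacent edges $a^-a$ and $bb^+$, the angle between the directions $\overrightarrow{a^-a}$ and $\overrightarrow{bb^+}$ is at most $\theta$. A configuration is a pair $(u,U)$ of a point $u$ and a vector $U$ of length $\ell$. A polygonal path $P$ with first vertex $u$ starts at $(u,U)$ if prepending the segment from $u-U$ to $u$ (the pre-edge) yields a discrete curvature-constrained path; $P$ with last vertex $v$ ends at $(v,V)$ if appending the segment from $v$ to $v+V$ (the post-edge) yields a discrete curvature-constrained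 path. A discrete Dubins path is a discrete curvature-constrained path of minimum length among all those starting at a given configuration $\mathcal U$ and ending at a given configuration $\mathcal V$. Standing assumption: paths make a non-zero turn at every internal vertex. *)

(* Defs.v *)
From Stdlib Require Import Reals Lra List.
Open Scope R_scope.

Definition pt := (R * R)%type.

Definition vadd (p q : pt) : pt := (fst p + fst q, snd p + snd q).
Definition vsub (p q : pt) : pt := (fst p - fst q, snd p - snd q).
Definition vscale (c : R) (p : pt) : pt := (c * fst p, c * snd p).
Definition dot (p q : pt) : R := fst p * fst q + snd p * snd q.
Definition cross (p q : pt) : R := fst p * snd q - snd p * fst q.
Definition vnorm (p : pt) : R := sqrt (dot p p).
Definition dist (p q : pt) : R := vnorm (vsub q p).

Definition vangle (p q : pt) : R := acos (dot p q / (vnorm p * vnorm q)).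

Definition vtx (P : list pt) (i : nat) : pt := nth i P (0, 0).
Definition evec (P : list pt) (i : nat) : pt := vsub (vtx P (S i)) (vtx P i).
Definition elen (P : list pt) (i : nat) : R := vnorm (evec P i).

Definition short (l : R) (P : list pt) (i : nat) : Prop := elen P i < l.

(* edge i (with both adjacent edges i-1 and i+1, i.e. 1 <= i, i+2 < length P)
   is an inflection edge if the adjacent edges lie (strictly) on opposite
   sides of its supporting line *)
Definition inflection (P : list pt) (i : nat) : Prop :=
  cross (evec P i) (vsub (vtx P (i - 1)) (vtx P i)) *
  cross (evec P i) (vsub (vtx P (i + 2)) (vtx P i)) < 0.

(* turn at internal vertex j (1 <= j, j+1 < length P) *)
Definition turn (P : list pt) (j : nat) : R := vangle (evec P (j - 1)) (evec P j).

Definition path_length (P : list pt) : R :=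
  fold_right Rplus 0 (map (elen P) (seq 0 (length P - 1))).

Definition dcc (theta l : R) (P : list pt) : Prop :=
  (forall i, (S i < length P)%nat -> vtx P i <> vtx P (S i)) /\
  (forall j, (1 <= j)%nat -> (S j < length P)%nat -> turn P j <= theta) /\
  (forall i, (i + 2 < length P)%nat -> ~ (short l P i /\ short l P (S i))) /\
  (forall i, (1 <= i)%nat -> (i + 2 < length P)%nat ->
     short l P i -> ~ inflection P i ->
     vangle (evec P (i - 1)) (evec P (S i)) <= theta).

Definition starts_at (theta l : R) (u U : pt) (P : list pt) : Prop :=
  P <> nil /\ vtx P 0 = u /\ dcc theta l (vsub u U :: P).

Definition ends_at (theta l : R) (v V : pt) (P : list pt) : Prop :=
  P <> nil /\ last P (0, 0) = v /\ dcc theta l (P ++ vadd v V :: nil).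

Definition dubins (theta l : R) (u U v V : pt) (P : list pt) : Prop :=
  dcc theta l P /\ starts_at theta l u U P /\ ends_at theta l v V P /\
  forall Q, dcc theta l Q -> starts_at theta l u U Q -> ends_at theta l v V Q ->
    path_length P <= path_length Q.

Definition nonzero_turns (P : list pt) : Prop :=
  forall j, (1 <= j)%nat -> (S j < length P)%nat -> turn P j <> 0.

(* P(eps) for the edge i -> i+1 (a = vertex i, b = vertex i+1):
   translate the part from b to the end by eps (a - b) *)
Definition shift_after (P : list pt) (i : nat) (eps : R) : list pt :=
  firstn (S i) P ++
  map (fun q => vadd q (vscale eps (vsub (vtx P i) (vtx P (S i))))) (skipn (S i) P).

(* Main.v *)
Require Import Defs.
From Stdlib Require Import Reals List Lia Lra.
Open Scope R_scope.

Section S.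
Variable P : list pt.
Variable i : nat.
Variable eps : R.
Hypothesis Hi : (S i < length P)%nat.
Let Q := shift_after P i eps.
Let d := vscale eps (vsub (vtx P i) (vtx P (S i))).

Lemma len_Q : length Q = length P.
Proof.
  unfold Q, shift_after. rewrite length_app, length_map, length_firstn, length_skipn. lia.
Qed.

Lemma vtx_lo j : (j <= i)%nat -> vtx Q j = vtx P j.
Proof.
  intro Hj. unfold Q, vtx, shift_after. rewrite app_nth1.
  - rewrite nth_firstn. replace (j <? S i)%nat with true by (symmetry; apply Nat.ltb_lt; lia). reflexivity.
  - rewrite length_firstn. lia.
Qed.

Lemma vtx_hi j : (S i <= j)%nat -> (j < length P)%nat -> vtx Q j = vadd (vtx P j) d.
Proof.
  intros H1 H2. unfold Q, vtx, shift_after. rewrite app_nth2; rewrite length_firstn.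
  2: lia.
  replace (Init.Nat.min (S i) (length P)) with (S i) by lia.
  rewrite nth_indep with (d' := (fun q => vadd q d) (0,0)).
  - unfold d. rewrite (map_nth (fun q => vadd q (vscale eps (vsub (vtx P i) (vtx P (S i)))))). rewrite nth_skipn. f_equal. f_equal. lia.
  - rewrite length_map, length_skipn. lia.
Qed.

Definition kf (j : nat) : R := if Nat.eqb j i then 1 - eps else 1.

Lemma evec_Q j : (S j < length P)%nat -> evec Q j = vscale (kf j) (evec P j).
Proof.
  intro Hj. unfold evec, kf.
  destruct (Nat.eqb_spec j i).
  - subst j. rewrite (vtx_lo i) by lia. rewrite (vtx_hi (S i)) by lia.
    unfold d. destruct (vtx P i), (vtx P (S i)). unfold vadd, vsub, vscale; simpl. f_equal; ring.
  - destruct (Nat.lt_ge_cases j i).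
    + rewrite (vtx_lo j), (vtx_lo (S j)) by lia. destruct (vtx P j), (vtx P (S j)). unfold vsub, vscale; simpl. f_equal; ring.
    + rewrite (vtx_hi j), (vtx_hi (S j)) by lia. destruct (vtx P j), (vtx P (S j)), d. unfold vadd, vsub, vscale; simpl. f_equal; ring.
Qed.
End S.

Lemma vnorm_scale c p : 0 < c -> vnorm (vscale c p) = c * vnorm p.
Proof.
  intro Hc. unfold vnorm. replace (dot (vscale c p) (vscale c p)) with ((c*c) * dot p p).
  - rewrite sqrt_mult_alt by nra. rewrite sqrt_square by lra. reflexivity.
  - destruct p; unfold dot, vscale; simpl; ring.
Qed.

Lemma vangle_scale c1 c2 p q : 0 < c1 -> 0 < c2 -> vangle (vscale c1 p) (vscale c2 q) = vangle p q.
Proof.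
  intros H1 H2. unfold vangle. rewrite !vnorm_scale by lra. f_equal.
  replace (dot (vscale c1 p) (vscale c2 q)) with ((c1*c2) * dot p q)
    by (destruct p, q; unfold dot, vscale; simpl; ring).
  unfold Rdiv. rewrite !Rinv_mult.
  transitivity (dot p q * (/ vnorm p * / vnorm q) * ((c1 * / c1) * (c2 * / c2))); [ring|].
  rewrite !Rinv_r by lra. ring.
Qed.

Lemma cross_scale c1 c2 p q : cross (vscale c1 p) (vscale c2 q) = c1 * c2 * cross p q.
Proof. destruct p, q; unfold cross, vscale; simpl; ring. Qed.

Lemma infl_iff (P : list pt) j : (1 <= j)%nat ->
  (inflection P j <-> 0 < cross (evec P j) (evec P (j-1)) * cross (evec P j) (evec P (S j))).
Proof.
  intro Hj. unfold inflection, evec.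
  replace (S (j-1)) with j by lia. replace (j+2)%nat with (S (S j)) by lia.
  destruct (vtx P (j-1)) as [a1 a2], (vtx P j) as [b1 b2], (vtx P (S j)) as [c1 c2],
    (vtx P (S (S j))) as [d1 d2].
  unfold cross, vsub; simpl.
  match goal with |- ?A < 0 <-> 0 < ?B => assert (A = - B) by ring end.
  lra.
Qed.

Lemma neq_evec (P : list pt) j : vtx P j <> vtx P (S j) -> evec P j <> (0,0).
Proof.
  unfold evec, vsub. destruct (vtx P j), (vtx P (S j)). simpl. intros H E.
  injection E; intros. apply H. f_equal; lra.
Qed.

Lemma evec_neq (P : list pt) j : evec P j <> (0,0) -> vtx P j <> vtx P (S j).
Proof. unfold evec, vsub. intros H E. rewrite E in H. apply H. f_equal; ring. Qed.

Theorem lemma6 (theta l : R) (u U v V : pt) (P : list pt) (i : nat)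
  (Htheta : 0 <= theta <= PI / 2)
  (Hk : exists k : nat, theta * INR k = 2 * PI)
  (Hl : 0 < l)
  (HU : vnorm U = l) (HV : vnorm V = l)
  (HP : dubins theta l u U v V P)
  (Hnz : nonzero_turns P)
  (Hi : (S i < length P)%nat)
  (Hlong : l < elen P i) :
  exists eps : R, 0 < eps /\ eps <= 1 /\ dcc theta l (shift_after P i eps).
Proof.
  destruct HP as [[D1 [D2 [D3 D4]]] _].
  set (L := elen P i).
  exists ((L - l) / L).
  assert (HL : 0 < L) by (unfold L; lra). assert (HLl : l < L) by (unfold L; lra).
  split; [apply Rdiv_lt_0_compat; lra|].
  split; [apply (Rmult_le_reg_r L); [lra|]; unfold Rdiv; rewrite Rmult_assoc, Rinv_l; lra|].
  set (eps := (L - l)/L).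
  assert (Hc : 1 - eps = l / L) by (unfold eps; field; lra).
  assert (Hk0 : forall j, 0 < kf i eps j).
  { intro j. unfold kf. destruct (Nat.eqb j i); [rewrite Hc; apply Rdiv_lt_0_compat|]; lra. }
  pose proof (len_Q P i eps Hi) as HlenQ.
  assert (HE := evec_Q P i eps Hi).
  assert (Helen : forall j, (S j < length P)%nat -> short l (shift_after P i eps) j -> j <> i /\ short l P j).
  { intros j Hj Hs. unfold short, elen in *. rewrite HE in Hs by lia.
    rewrite vnorm_scale in Hs by apply Hk0. unfold kf in Hs.
    destruct (Nat.eqb_spec j i).
    - subst j. exfalso. rewrite Hc in Hs. change (elen P i) with L in Hs.
      change (vnorm (evec P i)) with L in Hs. replace (l / L * L) with l in Hs by (field; lra). lra.
    - split; [auto | lra]. }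
  unfold dcc. rewrite HlenQ.
  split; [|split; [|split]].
  - intros j Hj. apply evec_neq. rewrite HE by lia. intro E.
    apply (neq_evec P j (D1 j Hj)).
    specialize (Hk0 j). destruct (evec P j) as [x y]. unfold vscale in E; simpl in E.
    injection E; intros. f_equal; nra.
  - intros j H1 H2. unfold turn. rewrite !HE by lia. rewrite vangle_scale by apply Hk0.
    apply D2; lia.
  - intros j Hj [Hs1 Hs2]. apply (D3 j Hj).
    split; [apply (Helen j) | apply (Helen (S j))]; auto; lia.
  - intros j H1 H2 Hs Hinf. destruct (Helen j ltac:(lia) Hs) as [Hji Hs'].
    rewrite !HE by lia. rewrite vangle_scale by apply Hk0.
    apply D4; auto. intro Hinf'. apply Hinf.
    apply infl_iff; [lia|]. apply infl_iff in Hinf'; [|lia].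
    rewrite !HE by lia. rewrite !cross_scale.
    pose proof (Hk0 j). pose proof (Hk0 (j-1)%nat). pose proof (Hk0 (S j)).
    set (X := cross (evec P j) (evec P (j - 1))) in *.
    set (Y := cross (evec P j) (evec P (S j))) in *.
    replace (kf i eps j * kf i eps (j - 1) * X * (kf i eps j * kf i eps (S j) * Y))
      with ((kf i eps j * kf i eps j) * (kf i eps (j-1) * kf i eps (S j)) * (X * Y)) by ring.
    apply Rmult_lt_0_compat; [|exact Hinf'].
    apply Rmult_lt_0_compat; apply Rmult_lt_0_compat; auto.
Qed.
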